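(* For $n\ge2$ and $u_1,\dots,u_n\in\mathcal B$, the Boolean cumulant satisfies $B_n[X(u_1),\dots,X(u_n)]=\sum_{\pi\in\widetilde{\mathrm{NC}}_{ns}(n)}\langle W_M(\pi)\Omega,\Omega\rangle_{\gamma,\phi}$, and for $n=1$ the Boolean cumulant $B_1[X(u_1)]$ is zero.
   Context: Let $\mathcal B$ be a unital $*$-algebra with star-linear maps $\phi:\mathcal B\to\mathbb C$, $\gamma:\mathcal B\to\mathcal B$, $\Lambda:\mathcal B\otimes_{alg}\mathcal B\to\mathcal B$, where $\phi$ is positive and faithful and $\gamma+\phi$ is completely positive, with $(\gamma+\phi)[b]:=\gamma[b]+\phi[b]1_{\mathcal B}$. Assume $\phi[v^*\Lambda(b\otimes u)]=\phi[\Lambda(b^*\otimes v)^*u]$ and $\gamma[v^*\Lambda(b\otimes u)]=\gamma[\Lambda(b^*\otimes v)^*u]$ for all $b,u,v$. On $\mathcal F_{alg}(\mathcal B)=\mathbb C\Omega\oplus\bigoplus_{n\ge1}\mathcal B^{\otimes n}$ use the form $\langle\Omega,\Omega\rangle_{\gamma,\phi}=1$, $\langle u_1\otimes\cdots\otimes u_n,v_1\otimes\cdots\otimes v_k\rangle_{\gamma,\phi}=\delta_{n=k}\phi[v_n^*(\gamma+\phi)[v_{n-1}^*\cdots(\gamma+\phi)[v_1^*u_1]\cdots u_{n-1}]u_n]$. For $b\in\mathcal B$: $a^+(b)\Omega=b$, $a^+(b)(u_1\otimes\cdots\otimes u_n)=b\otimes u_1\otimes\cdots\otimes u_n$; $a^-(b)\Omega=0$,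 $a^-(b)u_1=\phi[bu_1]\Omega$, $a^-(b)(u_1\otimes\cdots\otimes u_n)=(\gamma+\phi)[bu_1]u_2\otimes\cdots\otimes u_n$ ($n\ge2$); $a^0(b)\Omega=0$, $a^0(b)(u_1\otimes\cdots\otimes u_n)=\Lambda(b\otimes u_1)\otimes u_2\otimes\cdots\otimes u_n$; $X(b)=a^+(b)+a^-(b)+a^0(b)$. Boolean cumulants $B_k$ of operators $Y_1,\dots,Y_n$ with respect to the vacuum state $\psi(A)=\langle A\Omega,\Omega\rangle_{\gamma,\phi}$ are the multilinear functionals defined by $\psi[Y_1\cdots Y_n]=\sum_{\pi\in\mathrm{Int}(n)}\prod_{V\in\pi}B_{|V|}[Y_{V(1)},\dots,Y_{V(|V|)}]$, where $\mathrm{Int}(n)$ is the set of interval partitions of $\{1,\dots,n\}$. $\widetilde{\mathrm{NC}}_{ns}(n)$ is the set of noncrossing partitions of $\{1,\dots,n\}$ with no singleton blocks in which $1$ and $n$ lie in the same block. In a block the smallest element is opening, the largest closing, others middle; $W_M(\pi)=a_1(u_1)\cdots a_n(u_n)$ with $a_i=a^-$ (opening), $a^+$ (closing), $a^0$ (middle). *)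

(* Defs.v *)
From HB Require Import structures.
From mathcomp Require Import all_boot all_order all_algebra.
Set Implicit Arguments. Unset Strict Implicit. Unset Printing Implicit Defensive.
Import Order.TTheory GRing.Theory Num.Theory.
Local Open Scope ring_scope.

Section FockDefs.
Variables (C : numClosedFieldType) (B : algType C).

Definition star_algebra (star : B -> B) : Prop :=
  [/\ forall x, star (star x) = x,
      forall x y, star (x + y) = star x + star y,
      forall (a : C) x, star (a *: x) = a^* *: star x &
      forall x y, star (x * y) = star y * star x].

Definition star_linear_functional (star : B -> B) (phi : B -> C) : Prop :=
  (forall (a : C) x y, phi (a *: x + y) = a * phi x + phi y) /\
  (forall x, phi (star x) = (phi x)^*).

Definition star_linear_map (star : B -> B) (g : B -> B) : Prop :=
  (forall (a : C) x y, g (a *: x + y) = a *: g x + g y) /\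
  (forall x, g (star x) = star (g x)).

(* a star-linear map B (x)_alg B -> B, given by its values L b u = Lambda(b (x) u):
   bilinear, and star-preserving for the involution (b (x) u)^* = b^* (x) u^* *)
Definition star_linear_tensor (star : B -> B) (L : B -> B -> B) : Prop :=
  [/\ forall (a : C) x y u, L (a *: x + y) u = a *: L x u + L y u,
      forall (a : C) b u v, L b (a *: u + v) = a *: L b u + L b v &
      forall b u, L (star b) (star u) = star (L b u)].

Definition positive_functional (star : B -> B) (phi : B -> C) : Prop :=
  forall b, 0 <= phi (star b * b).

Definition faithful_functional (star : B -> B) (phi : B -> C) : Prop :=
  forall b, phi (star b * b) = 0 -> b = 0.

Definition gamma_plus_phi (gamma : B -> B) (phi : B -> C) (b : B) : B :=
  gamma b + phi b *: 1.

Definition mx_adj (star : B -> B) n (A : 'M[B]_n) : 'M[B]_n := map_mx star A^T.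

Definition pos_mx (star : B -> B) n (M : 'M[B]_n) : Prop :=
  exists s : seq 'M[B]_n, M = \sum_(A <- s) (mx_adj star A *m A).

Definition completely_positive (star : B -> B) (E : B -> B) : Prop :=
  forall n (M : 'M[B]_n), pos_mx star M -> pos_mx star (map_mx E M).

(* ---- the algebraic Fock space F_alg(B) ----
   A vector is a formal finite linear combination of simple tensors;
   the simple tensor u_1 (x) ... (x) u_n is the list [:: u_1; ...; u_n],
   and the empty list stands for Omega. *)
Definition vec := seq (C * seq B).
Definition op := seq B -> vec.

Definition Omega : vec := [:: (1, [::])].

Definition apply_op (A : op) (v : vec) : vec :=
  flatten [seq [seq (p.1 * q.1, q.2) | q <- A p.2] | p <- v].

Definition apply_ops (As : seq op) (v : vec) : vec := foldr apply_op v As.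

Definition form_simple (star : B -> B) (gamma : B -> B) (phi : B -> C)
  (u v : seq B) : C :=
  if size u != size v then 0 else
  match zip u v with
  | [::] => 1
  | (u1, v1) :: rest =>
      phi (foldl (fun g p => star p.2 * gamma_plus_phi gamma phi g * p.1)
                 (star v1 * u1) rest)
  end.

Definition form (star : B -> B) (gamma : B -> B) (phi : B -> C) (v w : vec) : C :=
  \sum_(p <- v) \sum_(q <- w) p.1 * (q.1)^* * form_simple star gamma phi p.2 q.2.

Definition acre (b : B) : op := fun s => [:: (1, b :: s)].

Definition aann (gamma : B -> B) (phi : B -> C) (b : B) : op := fun s =>
  match s with
  | [::] => [::]
  | [:: u1] => [:: (phi (b * u1), [::])]
  | u1 :: u2 :: s' => [:: (1, gamma_plus_phi gamma phi (b * u1) * u2 :: s')]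
  end.

Definition apres (L : B -> B -> B) (b : B) : op := fun s =>
  match s with
  | [::] => [::]
  | u1 :: s' => [:: (1, L b u1 :: s')]
  end.

Definition Xop (gamma : B -> B) (phi : B -> C) (L : B -> B -> B) (b : B) : op :=
  fun s => acre b s ++ aann gamma phi b s ++ apres L b s.

Definition vacuum_state (star : B -> B) (gamma : B -> B) (phi : B -> C)
  (As : seq op) : C :=
  form star gamma phi (apply_ops As Omega) Omega.

(* ---- set partitions of {0,...,n-1} (0-based version of {1,...,n}) ---- *)
Definition interval_partition n (P : {set {set 'I_n}}) : bool :=
  partition P [set: 'I_n] &&
  [forall V in P, [forall i : 'I_n, [forall j : 'I_n, [forall k : 'I_n,
     ((i \in V) && (k \in V) && (i <= j <= k)%N) ==> (j \in V)]]]].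

Definition boolean_cumulants (star : B -> B) (gamma : B -> B) (phi : B -> C)
  (Bc : seq op -> C) : Prop :=
  forall n (Y : 'I_n -> op), (0 < n)%N ->
    vacuum_state star gamma phi [seq Y i | i <- enum 'I_n] =
    \sum_(P : {set {set 'I_n}} | interval_partition P)
       \prod_(V in P) Bc [seq Y i | i <- enum V].

Definition ncns_tilde n (P : {set {set 'I_n}}) : bool :=
  [&& partition P [set: 'I_n],
      [forall a : 'I_n, [forall b : 'I_n, [forall c : 'I_n, [forall d : 'I_n,
         ((a < b < c)%N && (c < d)%N && (pblock P a == pblock P c)
           && (pblock P b == pblock P d)) ==> (pblock P a == pblock P b)]]]],
      [forall V in P, (1 < #|V|)%N] &
      [forall i : 'I_n, [forall j : 'I_n,
         ((i == 0%N :> nat) && (j == n.-1 :> nat)) ==> (pblock P i == pblock P j)]]].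

Definition WM_ops (gamma : B -> B) (phi : B -> C) (L : B -> B -> B) n
  (P : {set {set 'I_n}}) (u : 'I_n -> B) : seq op :=
  [seq (if [forall j in pblock P i, (i <= j)%N] then aann gamma phi (u i)
        else if [forall j in pblock P i, (j <= i)%N] then acre (u i)
        else apres L (u i)) | i <- enum 'I_n].

End FockDefs.

(* Main.v *)
Require Import Defs.
From HB Require Import structures.
From mathcomp Require Import all_boot all_order all_algebra.
From mathcomp Require Import zify.
Import Order.TTheory GRing.Theory Num.Theory.

Module Part1.
Set Implicit Arguments. Unset Strict Implicit. Unset Printing Implicit Defensive.
Local Open Scope ring_scope.

Inductive kind := KA | KC | KP.
Definition k2n k := match k with KA => 0%N | KC => 1%N | KP => 2%N end.
Definition n2k (n : nat) := match n with 0 => Some KA | 1 => Some KC | 2 => Some KP | _ => None end.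
Lemma k2nK : pcancel k2n n2k. Proof. by case. Qed.
HB.instance Definition _ := Equality.copy kind (pcan_type k2nK).

Definition kinds := [:: KC; KA; KP].
Fixpoint words (n : nat) : seq (seq kind) :=
  if n is n'.+1 then [seq k :: w | k <- kinds, w <- words n'] else [:: [::]].

Lemma wordsS n : words n.+1 = [seq k :: w | k <- kinds, w <- words n].
Proof. by []. Qed.
Lemma words0 : words 0 = [:: [::]]. Proof. by []. Qed.
Arguments words : simpl never.

Lemma mem_words n w : (w \in words n) = (size w == n).
Proof.
elim: n w => [|n IH] [|k w]; rewrite ?words0 ?wordsS //.
- by apply/allpairsP => -[[k w] [_ _ //]].
- rewrite eqSS -IH; apply/allpairsP/idP => [[[k' w'] [/= _ H [_ ->]]] // | H].
  by exists (k, w); split => //; case: k.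
Qed.

Lemma uniq_words n : uniq (words n).
Proof.
elim: n => [|n IH]; rewrite ?words0 ?wordsS //; apply: allpairs_uniq => //.
by move=> [a b] [c d] _ _ /= [-> ->].
Qed.

Lemma sum_words_cat (R : nmodType) a n (F : seq kind -> R) : (a <= n)%N ->
  \sum_(w <- words n) F w =
  \sum_(x <- words a) \sum_(y <- words (n - a)) F (x ++ y).
Proof.
elim: a n F => [|a IH] n F Han.
  by rewrite words0 big_seq1 subn0.
case: n Han => [|n] // Han.
rewrite !wordsS subSS !big_allpairs_dep; apply: eq_bigr => k _.
by rewrite (IH n (fun w => F (k :: w))).
Qed.

Definition step (k : kind) (o : option nat) : option nat :=
  match o with
  | None => None
  | Some h => match k with
              | KC => Some h.+1
              | KA => if h is h'.+1 then Some h' else None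
              | KP => if h is 0%N then None else Some h
              end
  end.
Definition run (w : seq kind) : option nat := foldr step (Some 0%N) w.

Definition irr (w : seq kind) : bool :=
  [&& (0 < size w)%N, run w == Some 0%N &
      all (fun j => run (drop j w) != Some 0%N) (iota 1 (size w).-1)].
Definition fr (k : nat) (w : seq kind) : bool :=
  irr (take k.+1 w) && (run (drop k.+1 w) == Some 0%N).

Lemma run_cat x y : run (x ++ y) = foldr step (run y) x.
Proof. by rewrite /run foldr_cat. Qed.

Lemma run_cat0 x y : run y = Some 0%N -> run (x ++ y) = run x.
Proof. by move=> ry; rewrite run_cat ry. Qed.

Lemma drop_take_cat (T : Type) j m (s : seq T) : (j <= m)%N ->
  drop j s = drop j (take m s) ++ drop m s.
Proof.
elim: s j m => [|x s IH] [|j] [|m] //=; first by rewrite cat_take_drop.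
by rewrite ltnS => /IH.
Qed.

Lemma run_drop_take j m w : (j <= m)%N -> run (drop m w) = Some 0%N ->
  run (drop j (take m w)) = run (drop j w).
Proof. by move=> jm rm; rewrite (drop_take_cat w jm) run_cat0. Qed.

Lemma size_take_le (T : Type) m (s : seq T) : (m <= size s)%N -> size (take m s) = m.
Proof. by move=> h; rewrite size_takel. Qed.

Lemma fr_unique w : run w = Some 0%N -> (0 < size w)%N ->
  exists2 k0, (k0 < size w)%N & fr k0 w /\ forall k, (k < size w)%N -> fr k w -> k = k0.
Proof.
move=> rw sw.
have exP : exists j, (0 < j)%N && (run (drop j w) == Some 0%N).
  by exists (size w); rewrite sw drop_size eqxx.
case: (ex_minnP exP) => m /andP[m0 /eqP rm] mmin.
have mle : (m <= size w)%N by apply: mmin; rewrite sw drop_size eqxx.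
exists m.-1; first by rewrite prednK // (leq_trans _ mle).
have frm : fr m.-1 w.
  rewrite /fr prednK // rm eqxx andbT /irr size_take_le // m0 /=.
  have -> : run (take m w) = Some 0%N.
    by rewrite -(drop0 (take m w)) (run_drop_take (leq0n m) rm) drop0.
  rewrite eqxx /=.
  apply/allP => j; rewrite mem_iota => /andP[j1 jm].
  rewrite add1n prednK // in jm.
  rewrite (run_drop_take (ltnW jm) rm).
  apply/negP => /eqP h.
  have : (m <= j)%N by apply: mmin; rewrite j1 h eqxx.
  by rewrite leqNgt jm.
split=> // k kn /andP[/and3P[_ _ /allP irk] /eqP rk].
have mk : (m <= k.+1)%N by apply: mmin; rewrite rk eqxx.
case: (ltngtP m k.+1) => [lt||eq]; last by rewrite eq.
- exfalso.
  have := irk m; rewrite mem_iota size_take_le // m0 add1n /= lt => /(_ isT).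
  by rewrite (run_drop_take (ltnW lt) rk) rm.
- by rewrite ltnNge mk.
Qed.

Section Fock.
Variables (C : numClosedFieldType) (B : algType C).
Variables (star : B -> B) (gamma : B -> B) (phi : B -> C) (L : B -> B -> B).

Definition opof (k : kind) (u : B) : op B :=
  match k with KA => aann gamma phi u | KC => acre u | KP => apres L u end.

Fixpoint ops (w : seq kind) (us : seq B) : seq (op B) :=
  match w, us with k :: w', u :: us' => opof k u :: ops w' us' | _, _ => [::] end.

Definition Fg (g : seq B -> C) (v : vec B) : C := \sum_(p <- v) p.1 * g p.2.

Lemma Fg_cat g v1 v2 : Fg g (v1 ++ v2) = Fg g v1 + Fg g v2.
Proof. by rewrite /Fg big_cat. Qed.

Lemma Fg_nil g : Fg g [::] = 0.
Proof. by rewrite /Fg big_nil. Qed.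

Lemma Fg_seq1 g c s : Fg g [:: (c, s)] = c * g s.
Proof. by rewrite /Fg big_seq1. Qed.

Lemma Fg_ext g1 g2 v : g1 =1 g2 -> Fg g1 v = Fg g2 v.
Proof. by move=> e; apply: eq_bigr => p _; rewrite e. Qed.

Lemma Fg_sum (T : Type) (r : seq T) (G : T -> seq B -> C) v :
  Fg (fun s => \sum_(x <- r) G x s) v = \sum_(x <- r) Fg (G x) v.
Proof.
rewrite /Fg exchange_big /=; apply: eq_bigr => p _; by rewrite mulr_sumr.
Qed.

Lemma Fg_apply_op g (A : op B) v :
  Fg g (apply_op A v) = Fg (fun s => Fg g (A s)) v.
Proof.
elim: v => [|p v IH]; first by rewrite /apply_op /= !Fg_nil.
rewrite /apply_op /= Fg_cat -/(apply_op A v) IH.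
rewrite /Fg big_cons big_map; congr (_ + _).
by rewrite mulr_sumr; apply: eq_bigr => q _; rewrite mulrA.
Qed.

Lemma Fg_apply_ops g (As : seq (op B)) v :
  Fg g (apply_ops As v) = Fg (fun s => Fg g (apply_ops As [:: (1, s)])) v.
Proof.
elim: As g => [|A As IH] g /=.
  by apply: Fg_ext => s; rewrite Fg_seq1 mul1r.
rewrite Fg_apply_op IH; apply: Fg_ext => s.
by rewrite -Fg_apply_op.
Qed.

Lemma Fg_Xop_expand g (us : seq B) v :
  Fg g (apply_ops (map (Xop gamma phi L) us) v) =
  \sum_(w <- words (size us)) Fg g (apply_ops (ops w us) v).
Proof.
elim: us g => [|u us IH] g /=; first by rewrite words0 big_seq1.
rewrite Fg_apply_op.
rewrite (Fg_ext _ (g2 := fun s => \sum_(k <- kinds) Fg g (opof k u s))); last first.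
  by move=> s; rewrite /Xop !Fg_cat /kinds !big_cons big_nil addr0.
rewrite IH wordsS big_allpairs_dep /= exchange_big /=.
apply: eq_bigr => w _; rewrite Fg_sum; apply: eq_bigr => k _.
by rewrite Fg_apply_op.
Qed.

Definition g0 (s : seq B) : C := form_simple star gamma phi s [::].

Lemma g0_nil : g0 [::] = 1. Proof. by []. Qed.
Lemma g0_cons x s : g0 (x :: s) = 0. Proof. by []. Qed.

Lemma vacuum_Fg As : vacuum_state star gamma phi As = Fg g0 (apply_ops As (Omega B)).
Proof.
rewrite /vacuum_state /form /Fg; apply: eq_bigr => p _.
by rewrite big_seq1 /= conjC1 mulr1.
Qed.

Definition wval (w : seq kind) (us : seq B) : C := vacuum_state star gamma phi (ops w us).
Definition Mom (us : seq B) : C := vacuum_state star gamma phi (map (Xop gamma phi L) us).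

Lemma Mom_expand us : Mom us = \sum_(w <- words (size us)) wval w us.
Proof.
rewrite /Mom vacuum_Fg Fg_Xop_expand; apply: eq_bigr => w _.
by rewrite /wval vacuum_Fg.
Qed.

Lemma shape w us : size w = size us ->
  match run w with
  | None => apply_ops (ops w us) (Omega B) = [::]
  | Some h => exists c s, apply_ops (ops w us) (Omega B) = [:: (c, s)] /\ size s = h
  end.
Proof.
elim: w us => [|k w IH] [|u us] //=.
  by move=> _; exists 1, [::].
move=> [/IH].
rewrite /run /= -/(run w).
case: (run w) => [h|] /=; last by move=> ->.
move=> [c [s [-> <-]]].
case: k => /=.
- case: s => [|u1 [|u2 s]] /=; first by [].
    by exists (c * phi (u * u1)), [::].
  by exists (c * 1), (gamma_plus_phi gamma phi (u * u1) * u2 :: s).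
- by exists (c * 1), (u :: s).
- case: s => [|u1 s] //=.
  by exists (c * 1), (L u u1 :: s).
Qed.

Lemma val_invalid w us : size w = size us -> run w != Some 0%N -> wval w us = 0.
Proof.
move=> /shape; rewrite /wval vacuum_Fg.
case: (run w) => [h|] => [[c [s [-> hs]]] hn|-> _]; last by rewrite Fg_nil.
rewrite Fg_seq1; case: s hs => [|x s] hs; last by rewrite g0_cons mulr0.
by move: hn; rewrite -hs.
Qed.

Lemma val_valid w us : size w = size us -> run w = Some 0%N ->
  apply_ops (ops w us) (Omega B) = [:: (wval w us, [::])].
Proof.
move=> /shape; rewrite /wval vacuum_Fg => + E; rewrite E.
move=> [c [[|x s] [-> hs]]] //.
by rewrite Fg_seq1 g0_nil mulr1.
Qed.

Lemma ops_cat w1 w2 us1 us2 : size w1 = size us1 ->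
  ops (w1 ++ w2) (us1 ++ us2) = ops w1 us1 ++ ops w2 us2.
Proof. by elim: w1 us1 => [|k w1 IH] [|u us1] //= => -[/IH ->]. Qed.

Lemma val_cat w1 w2 us1 us2 : size w1 = size us1 -> size w2 = size us2 ->
  run w2 = Some 0%N -> wval (w1 ++ w2) (us1 ++ us2) = wval w1 us1 * wval w2 us2.
Proof.
move=> s1 s2 r2.
rewrite {1}/wval vacuum_Fg ops_cat // /apply_ops foldr_cat -!/(apply_ops _ _).
rewrite (val_valid s2 r2) Fg_apply_ops Fg_seq1 mulrC; congr (_ * _).
by rewrite /wval vacuum_Fg.
Qed.


Definition Irr (us : seq B) : C := \sum_(w <- words (size us) | irr w) wval w us.

Lemma size_words n w : w \in words n -> size w = n.
Proof. by rewrite mem_words => /eqP. Qed.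

Lemma Mom_rec us : (0 < size us)%N ->
  Mom us = \sum_(k < size us) Irr (take k.+1 us) * Mom (drop k.+1 us).
Proof.
move=> n0; set n := size us.
rewrite Mom_expand.
transitivity (\sum_(w <- words n) \sum_(k < n) (fr k w)%:R * wval w us).
  rewrite big_seq [RHS]big_seq; apply: eq_bigr => w /size_words sw.
  case: (boolP (run w == Some 0%N)) => [/eqP rw|rw]; last first.
    by rewrite val_invalid // big1 // => k _; rewrite mulr0.
  have [k0 k0n [frk0 uk]] : exists2 k0, (k0 < size w)%N & fr k0 w /\ forall k, (k < size w)%N -> fr k w -> k = k0.
    by apply: fr_unique; rewrite // sw.
  rewrite sw in k0n uk.
  rewrite (bigD1 (Ordinal k0n)) //= frk0 mul1r big1 ?addr0 // => k kk0.
  case: (boolP (fr k w)) => [fk|]; last by rewrite mul0r.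
  by move: kk0; rewrite -val_eqE /= (uk _ (ltn_ord k) fk) eqxx.
rewrite exchange_big /=; apply: eq_bigr => k _.
rewrite (sum_words_cat _ (ltn_ord k)).
rewrite /Irr Mom_expand big_distrl /=.
have sk : size (take k.+1 us) = k.+1 by rewrite size_take_le.
have sd : size (drop k.+1 us) = (n - k.+1)%N by rewrite size_drop.
rewrite sk sd [RHS]big_mkcond /=.
rewrite big_seq [RHS]big_seq.
apply: eq_bigr => x /size_words sx.
have Ex : {in words (n - k.+1), forall y, (fr k (x ++ y))%:R * wval (x ++ y) us =
   (irr x)%:R * wval x (take k.+1 us) * wval y (drop k.+1 us)}.
  move=> y yw.
  have sy := size_words yw.
  rewrite /fr take_size_cat // drop_size_cat //.
  case: (boolP (run y == Some 0%N)) => [/eqP ry|ry]; last first.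
    by rewrite andbF mul0r (val_invalid (us := drop k.+1 us)) ?mulr0 ?sy ?sd.
  rewrite andbT.
  case: (irr x); last by rewrite !mul0r.
  rewrite !mul1r -{1}(cat_take_drop k.+1 us) val_cat //.
    by rewrite sk.
  by rewrite sd.
rewrite (eq_big_seq _ Ex) -mulr_sumr.
by case: (irr x); rewrite ?mul1r ?mul0r.
Qed.

End Fock.

End Part1.
Import Part1.

Module Part2.
Set Implicit Arguments. Unset Strict Implicit. Unset Printing Implicit Defensive.
Local Open Scope ring_scope.

Section IPdec.
Variable n : nat.

Definition Dset (a : nat) : {set 'I_n} := [set i : 'I_n | (a <= i)%N].
Definition ivl (a k : nat) : {set 'I_n} := [set i : 'I_n | (a <= i <= k)%N].
Definition intc (P : {set {set 'I_n}}) : bool :=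
  [forall V in P, [forall i : 'I_n, [forall j : 'I_n, [forall k : 'I_n,
     ((i \in V) && (k \in V) && (i <= j <= k)%N) ==> (j \in V)]]]].
Definition IP (a : nat) (P : {set {set 'I_n}}) : bool := partition P (Dset a) && intc P.

Lemma IP0 P : interval_partition P = IP 0 P.
Proof.
rewrite /interval_partition /IP; congr (_ && _); congr partition.
Qed.

Lemma IPn P : IP n P = (P == set0).
Proof.
have e : Dset n = set0 by apply/setP => i; rewrite !inE leqNgt ltn_ord.
rewrite /IP e partition_set0; case: eqP => //= ->.
by apply/forall_inP => V; rewrite inE.
Qed.

Lemma intcP (P : {set {set 'I_n}}) : reflect (forall V, V \in P -> forall i j k : 'I_n, i \in V -> k \in V ->
   (i <= j <= k)%N -> j \in V) (intc P).
Proof.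
apply: (iffP forall_inP) => [H V PV i j k iV kV ijk | H V PV].
  by move: (H V PV) => /forallP/(_ i)/forallP/(_ j)/forallP/(_ k)/implyP; apply; rewrite iV kV ijk.
apply/forallP => i; apply/forallP => j; apply/forallP => k; apply/implyP.
by move=> /andP[/andP[iV kV] ijk]; exact: (H V PV i j k).
Qed.

Lemma cover_setU1 (A : {set 'I_n}) (P : {set {set 'I_n}}) : A \notin P -> cover (A |: P) = A :|: cover P.
Proof. by move=> AP; rewrite /cover big_setU1. Qed.

Section Fix.
Variables (a : nat) (an : (a < n)%N).
Let a0 : 'I_n := Ordinal an.

Lemma blk (P : {set {set 'I_n}}) : IP a P -> exists2 m : 'I_n, (a <= m)%N & pblock P a0 = ivl a m.
Proof.
move=> /andP[/and3P[/eqP cP tP nP] /intcP iP].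
have a0c : a0 \in cover P by rewrite cP inE.
have Vin := pblock_mem a0c.
have a0V : a0 \in pblock P a0 by rewrite mem_pblock.
case: (arg_maxnP (fun j : 'I_n => val j) a0V) => m mV mmax.
have Vsub : forall x, x \in pblock P a0 -> (a <= x)%N.
  move=> x xV; have : x \in cover P by apply/bigcupP; exists (pblock P a0).
  by rewrite cP inE.
exists m; first exact: Vsub.
apply/setP => x; rewrite inE; apply/idP/idP => [xV|/andP[ax xm]].
  by rewrite Vsub //=; exact: mmax.
by apply: (iP _ Vin a0 x m a0V mV); rewrite /= ax xm.
Qed.

Lemma ivl_inj k k' : (a <= k < n)%N -> (a <= k' < n)%N -> ivl a k = ivl a k' -> k = k'.
Proof.
move=> /andP[ak kn] /andP[ak' kn'] e.
have h : (k <= k')%N.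
  by have := congr1 (fun S : {set 'I_n} => Ordinal kn \in S) e; rewrite !inE /= ak leqnn /= => /esym ->.
have h' : (k' <= k)%N.
  by have := congr1 (fun S : {set 'I_n} => Ordinal kn' \in S) e; rewrite !inE /= ak' leqnn /= => ->.
by apply/eqP; rewrite eqn_leq h h'.
Qed.

Lemma a0_ivl k : (a <= k)%N -> a0 \in ivl a k.
Proof. by move=> ak; rewrite inE /= leqnn ak. Qed.

Lemma IP_split k (P' : {set {set 'I_n}}) : (a <= k < n)%N ->
  [&& IP a (ivl a k |: P'), pblock (ivl a k |: P') a0 == ivl a k &
      (ivl a k |: P') :\ ivl a k == P'] = IP k.+1 P'.
Proof.
move=> /andP[ak kn]; set Bk := ivl a k.
have a0B : a0 \in Bk by apply: a0_ivl.
apply/idP/idP.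
- move=> /and3P[/andP[/and3P[/eqP cP tP nP] /intcP iP] _ /eqP e].
  have BP' : Bk \notin P'.
    by have := congr1 (fun S : {set {set 'I_n}} => Bk \in S) e; rewrite !inE eqxx /= => <-.
  rewrite cover_setU1 // in cP.
  have tP' : trivIset P' by apply: trivIsetS tP; apply: subsetUr.
  rewrite /IP /partition tP' /=; apply/andP; split; first (apply/andP; split).
  + apply/eqP/setP => x; rewrite inE; apply/idP/idP.
    * move=> xc.
      have : x \in Bk :|: cover P' by rewrite inE xc orbT.
      rewrite cP inE => ax; rewrite ltnNge; apply/negP => xk.
      have xB : x \in Bk by rewrite inE ax xk.
      case/bigcupP: xc => V VP xV.
      have := (trivIsetP tP) V Bk; rewrite !inE VP eqxx orbT => /(_ isT isT).
      have -> : V != Bk by apply: contraNneq BP' => <-.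
      by move=> /(_ isT); rewrite -setI_eq0 => /eqP/setP/(_ x); rewrite !inE xV /= ax xk.
    * move=> kx.
      have : x \in Dset a by rewrite inE (leq_trans ak (ltnW kx)).
      rewrite -cP inE => /orP[|//]; rewrite inE => /andP[_ xk].
      by move: kx; rewrite ltnNge xk.
  + by apply: contra nP => h; rewrite inE h orbT.
  + by apply/intcP => V VP; apply: iP; rewrite inE VP orbT.
- move=> /andP[/and3P[/eqP cP tP nP] /intcP iP].
  have BP' : Bk \notin P'.
    apply/negP => BP; have : a0 \in cover P' by apply/bigcupP; exists Bk.
    by rewrite cP inE /= ltnNge ak.
  have [tU _] : trivIset (Bk |: P') /\ Bk \notin P'.
    apply: trivIsetU1 => // V VP; rewrite -setI_eq0; apply/eqP/setP => x.
    rewrite !inE; apply/negP => /andP[/andP[_ xk] xV].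
    have : x \in cover P' by apply/bigcupP; exists V.
    by rewrite cP inE ltnNge xk.
  have pB : pblock (Bk |: P') a0 = Bk.
    by rewrite (def_pblock tU (setU11 _ _) a0B).
  rewrite pB eqxx setU1K // eqxx !andbT /IP /partition tU cover_setU1 // cP /=.
  apply/andP; split; first (apply/andP; split).
  + apply/eqP/setP => x; rewrite !inE; apply/idP/idP => /=; lia.
  + rewrite !inE negb_or nP andbT; apply/eqP => h.
    by move: a0B; rewrite -h inE.
  + apply/intcP => V /setU1P[->|VP]; last exact: iP.
    move=> i j k'; rewrite !inE => /andP[ai _] /andP[_ k'k] /andP[ij jk'].
    by apply/andP; split; [apply: leq_trans ij | apply: leq_trans k'k].
Qed.

Definition pmax (P : {set {set 'I_n}}) : 'I_n := [arg max_(j > a0 in pblock P a0) (j : nat)].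

Lemma blk2 P : IP a P -> (a <= pmax P)%N /\ pblock P a0 = ivl a (pmax P).
Proof.
move=> hP; have [m am e] := blk hP.
have a0V : a0 \in pblock P a0 by rewrite e; apply: a0_ivl.
rewrite /pmax; case: (arg_maxnP (fun j : 'I_n => val j) a0V) => m' m'V mmax.
have : m' \in ivl a m by rewrite -e.
rewrite inE => /andP[am' h].
have mV : m \in pblock P a0 by rewrite e inE am leqnn.
have m'm : val m' = val m by apply/eqP; rewrite eqn_leq h /=; exact: (mmax m mV).
by rewrite am' e (_ : m' = m) //; apply: val_inj.
Qed.

Lemma IP_dec (R : comPzRingType) (F : {set 'I_n} -> R) :
  \sum_(P | IP a P) \prod_(V in P) F V =
  \sum_(k < n | (a <= k)%N) F (ivl a k) * \sum_(P | IP k.+1 P) \prod_(V in P) F V.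
Proof.
rewrite (partition_big pmax (fun k : 'I_n => (a <= k)%N)); last first.
  by move=> P /blk2[].
apply: eq_bigr => k ak.
transitivity (\sum_(P | IP a P && (pblock P a0 == ivl a k)) \prod_(V in P) F V).
  apply: eq_bigl => P; case: (boolP (IP a P)) => //= hP.
  have [am e] := blk2 hP; rewrite e.
  apply/eqP/eqP => [<- //|/ivl_inj h]; apply: val_inj; apply: h.
    by rewrite am ltn_ord.
  by rewrite ak ltn_ord.
rewrite (reindex_onto (fun P' => ivl a k |: P') (fun P => P :\ ivl a k)); last first.
  move=> P /andP[hP /eqP e]; rewrite setD1K // -e pblock_mem //.
  by move: hP => /andP[/and3P[/eqP -> _ _] _]; rewrite inE.
rewrite mulr_sumr; apply: eq_big => P'.
  by rewrite -andbA IP_split // ak ltn_ord.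
move=> /andP[_ /eqP e].
have BP : ivl a k \notin P'.
  by have := congr1 (fun S : {set {set 'I_n}} => ivl a k \in S) e; rewrite !inE eqxx /= => <-.
by rewrite big_setU1.
Qed.

End Fix.
End IPdec.

Lemma enum_ivl n a k : (a <= k < n)%N -> map val (enum (ivl n a k)) = iota a (k.+1 - a).
Proof.
move=> /andP[ak kn].
rewrite /enum_mem -enumT.
rewrite (eq_filter (a2 := preim val (fun i : nat => (a <= i <= k)%N))); last first.
  by move=> i; rewrite /= inE.
rewrite -filter_map val_enum_ord.
have -> : n = (a + (n - a))%N by rewrite subnKC // (leq_trans ak (ltnW kn)).
rewrite iotaD filter_cat add0n.
rewrite (eq_in_filter (a2 := pred0)); last first.
  by move=> i; rewrite mem_iota /=; lia.
rewrite filter_pred0 /=.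
rewrite (eq_in_filter (a2 := fun i => (i <= a + (k - a))%N)); last first.
  by move=> i; rewrite mem_iota => /andP[-> _]; rewrite subnKC.
rewrite filter_iota_leq; last by rewrite ltn_sub2r // (leq_ltn_trans ak kn).
by rewrite subSn.
Qed.

Section BR.
Variables (C : numClosedFieldType) (B : algType C).
Variables (star : B -> B) (gamma : B -> B) (phi : B -> C).
Variable (Bc : seq (op B) -> C).
Hypothesis HBc : boolean_cumulants star gamma phi Bc.

Definition d0 : op B := fun _ => [::].

Definition Hsum (t : seq (op B)) (b : nat) : C :=
  \sum_(P : {set {set 'I_(size t)}} | IP b P) \prod_(V in P) Bc [seq nth d0 t i | i : 'I_(size t) <- enum V].

Lemma slice t a k : (a <= k < size t)%N ->
  [seq nth d0 t i | i : 'I_(size t) <- enum (ivl (size t) a k)] = take (k.+1 - a) (drop a t).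
Proof.
move=> h; rewrite (map_comp (nth d0 t) (@nat_of_ord _)) enum_ivl // map_nth_iota //.
by move: h => /andP[ak kn]; rewrite leq_sub2r.
Qed.

Lemma H_rec t b : (b < size t)%N ->
  Hsum t b = \sum_(b <= k < size t) Bc (take (k.+1 - b) (drop b t)) * Hsum t k.+1.
Proof.
move=> bn; rewrite /Hsum (IP_dec bn) big_geq_mkord; apply: eq_big => // k bk.
by rewrite slice // bk ltn_ord.
Qed.

Lemma H_end t : Hsum t (size t) = 1.
Proof.
rewrite /Hsum (eq_bigl (fun P => P == set0)); last by move=> P; rewrite IPn.
by rewrite big_pred1_eq big_set0.
Qed.

Lemma H_drop N : forall t b, (size t - b <= N)%N -> (b <= size t)%N -> Hsum t b = Hsum (drop b t) 0.
Proof.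
elim: N => [|N IH] t b hN hb.
  have eb : b = size t by apply/eqP; rewrite eqn_leq hb -subn_eq0 -leqn0.
  by rewrite eb drop_size H_end (H_end [::]).
case: (ltngtP b (size t)) => [bn|nb|eb]; last first.
- by rewrite eb drop_size H_end (H_end [::]).
- by move: hb; rewrite leqNgt nb.
have sd : size (drop b t) = (size t - b)%N by rewrite size_drop.
rewrite H_rec // H_rec; last by rewrite sd subn_gt0.
rewrite (big_addn 0 _ b) sd; apply: eq_big_nat => j /andP[_ jn].
rewrite subn0 drop0 -addSn addnK.
congr (_ * _).
rewrite (IH t (j + b).+1); [|lia|lia].
rewrite (IH (drop b t) j.+1); [|rewrite sd; lia|rewrite sd; lia].
by rewrite !drop_drop addSn.
Qed.

Lemma vacuum_nil : vacuum_state star gamma phi [::] = 1.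
Proof. by rewrite /vacuum_state /Defs.form /Omega !big_seq1 /= conjC1 !mul1r. Qed.

Lemma vacuum_H t : vacuum_state star gamma phi t = Hsum t 0.
Proof.
case: (posnP (size t)) => [t0|tp].
  by move: t0 => /size0nil ->; rewrite vacuum_nil (H_end [::]).
have := HBc (fun i : 'I_(size t) => nth d0 t i) tp.
have -> : [seq nth d0 t i | i : 'I_(size t) <- enum 'I_(size t)] = t.
  by rewrite (map_comp (nth d0 t) (@nat_of_ord _)) val_enum_ord map_nth_iota0 // take_size.
move=> ->; apply: eq_bigl => P; exact: IP0.
Qed.

Lemma BR t : (0 < size t)%N -> vacuum_state star gamma phi t =
  \sum_(k < size t) Bc (take k.+1 t) * vacuum_state star gamma phi (drop k.+1 t).
Proof.
move=> tp; rewrite vacuum_H H_rec // big_mkord; apply: eq_bigr => k _.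
rewrite subn0 drop0 vacuum_H (H_drop (leqnn _)) //.
Qed.

End BR.

End Part2.
Import Part2.

Module Part3.
Set Implicit Arguments. Unset Strict Implicit. Unset Printing Implicit Defensive.

Definition lam (d : nat -> nat) (i : nat) : nat := maxn (d i) (d i.+1).
Definition Rw (d : nat -> nat) (i j : nat) : bool :=
  (lam d i == lam d j) &&
  all (fun m => lam d i <= d m) (index_iota (minn i j).+1 (maxn i j).+1).

Lemma RwP d i j : reflect (lam d i = lam d j /\ forall m, minn i j < m <= maxn i j -> lam d i <= d m) (Rw d i j).
Proof.
apply: (iffP andP) => [[/eqP e /allP h]|[e h]]; split => //.
- by move=> m hm; apply: h; rewrite mem_index_iota ltnS.
- by apply/eqP.
- by apply/allP => m; rewrite mem_index_iota ltnS; apply: h.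
Qed.

Lemma Rw_refl d i : Rw d i i.
Proof. by apply/RwP; split => // m; lia. Qed.

Lemma Rw_sym d i j : Rw d i j = Rw d j i.
Proof.
by apply/RwP/RwP => -[e h]; split => [|m hm]; try (by rewrite e); rewrite -e; apply: h; lia.
Qed.

Lemma Rw_trans d i j k : Rw d i j -> Rw d j k -> Rw d i k.
Proof.
move=> /RwP[e1 h1] /RwP[e2 h2]; apply/RwP; split; first by rewrite e1.
move=> m hm.
have [c1|c2] : (minn i j < m <= maxn i j) \/ (minn j k < m <= maxn j k) by lia.
  exact: h1.
by rewrite e1; apply: h2.
Qed.

Lemma Rw_NC d a b c e : a < b < c -> c < e -> Rw d a c -> Rw d b e -> Rw d a b.
Proof.
move=> /andP[ab bc] ce /RwP[e1 h1] /RwP[e2 h2].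
have lb : lam d a <= lam d b.
  rewrite /lam leq_max; apply/orP; left; apply: h1; lia.
have lc : lam d b <= lam d c.
  rewrite /lam leq_max; apply/orP; left; apply: h2; lia.
apply/RwP; split; first by apply/eqP; rewrite eqn_leq lb e1 lc.
move=> m hm; apply: h1; lia.
Qed.

Definition LRspec (k : kind) (x y : nat) : Prop :=
  match k with KC => x = y.+1 | KA => y = x.+1 | KP => x = y /\ 0 < x end.

Section WordSide.
Variables (n : nat) (w : seq kind) (d : nat -> nat).
Hypotheses (Hs : size w = n) (Hd0 : d 0 = 0) (Hdn : d n = 0)
  (HLR : forall j, j < n -> LRspec (nth KA w j) (d j) (d j.+1)).

Lemma RS i : i < n -> nth KA w i != KC -> exists2 j, i < j < n & Rw d i j.
Proof.
move=> iN wi.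
have [lamE lpos] : lam d i = d i.+1 /\ 0 < d i.+1.
  move: (HLR iN); case: (nth KA w i) wi => //= _; rewrite /lam.
    by move=> ->; split; [apply/maxn_idPr; exact: leqnSn|].
  by move=> [<- p]; rewrite maxnn.
set l := d i.+1 in lamE lpos.
have exP : exists m, (i < m) && (d m < l) by exists n; rewrite iN Hdn lpos.
case: (ex_minnP exP) => m /andP[im dm] mmin.
have mn : m <= n by apply: mmin; rewrite iN Hdn lpos.
have im1 : i.+1 < m.
  rewrite ltn_neqAle im andbT; apply/negP => /eqP e; by move: dm; rewrite -e ltnn.
have dp : forall m', i < m' < m -> l <= d m'.
  move=> m' /andP[h1 h2]; rewrite leqNgt; apply/negP => h.
  by have := mmin m'; rewrite h1 h /= => /(_ isT); rewrite leqNgt h2.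
have pn : m.-1 < n by lia.
have dpm : l <= d m.-1 by apply: dp; lia.
have ep : (m.-1).+1 = m by lia.
have := HLR pn; rewrite ep.
case: (nth KA w m.-1) => /=.
- move=> e; lia.
- move=> e.
  exists m.-1; first by lia.
  apply/RwP; split.
    rewrite lamE /lam ep; lia.
  move=> m' hm'; rewrite lamE; apply: dp; lia.
- move=> [e _]; lia.
Qed.

Lemma LS i : i < n -> nth KA w i != KA -> exists2 j, j < i & Rw d j i.
Proof.
move=> iN wi.
have [lamE lpos] : lam d i = d i /\ 0 < d i.
  move: (HLR iN); case: (nth KA w i) wi => //= _; rewrite /lam.
    by move=> ->; split; [apply/maxn_idPl; exact: leqnSn|].
  by move=> [<- p]; rewrite maxnn.
set l := d i in lamE lpos.
have exP : exists m, (m <= i) && (d m < l) by exists 0; rewrite Hd0 lpos.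
have ub : forall m, (m <= i) && (d m < l) -> m <= i by move=> m /andP[].
case: (ex_maxnP exP ub) => m /andP[mi dm] mmax.
have mi' : m < i.
  rewrite ltn_neqAle mi andbT; apply/negP => /eqP e; by move: dm; rewrite e ltnn.
have dp : forall m', m < m' <= i -> l <= d m'.
  move=> m' /andP[h1 h2]; rewrite leqNgt; apply/negP => h.
  by have := mmax m'; rewrite h2 h /= => /(_ isT); rewrite leqNgt h1.
have mn : m < n by lia.
have dpm : l <= d m.+1 by apply: dp; lia.
have := HLR mn.
case: (nth KA w m) => /=.
- move=> e.
  exists m => //.
  apply/RwP; split.
    rewrite lamE /lam; lia.
  move=> m' hm'; rewrite /lam; have := dp m'; lia.
- move=> e; lia.
- move=> [e _]; lia.
Qed.

Lemma NoLeft i j : i < n -> nth KA w i = KA -> j < i -> ~~ Rw d j i.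
Proof.
move=> iN wi ji; apply/negP => /RwP[e h].
move: (HLR iN); rewrite wi /= => di.
have := h i; rewrite /lam in e h *; lia.
Qed.

Lemma NoRight i j : i < n -> nth KA w i = KC -> i < j -> ~~ Rw d i j.
Proof.
move=> iN wi ij; apply/negP => /RwP[e h].
move: (HLR iN); rewrite wi /= => di.
have := h i.+1; rewrite /lam in e h *; lia.
Qed.

End WordSide.


Section Part.
Variable n : nat.
Definition kindP (P : {set {set 'I_n}}) (i : 'I_n) : kind :=
  if [forall j in pblock P i, (i <= j)%N] then KA
  else if [forall j in pblock P i, (j <= i)%N] then KC else KP.
Definition wordP (P : {set {set 'I_n}}) : seq kind := [seq kindP P i | i <- enum 'I_n].

Lemma size_wordP P : size (wordP P) = n.
Proof. by rewrite size_map size_enum_ord. Qed.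

Lemma nth_wordP P (i : 'I_n) : nth KA (wordP P) i = kindP P i.
Proof. by rewrite (nth_map i) ?size_enum_ord // nth_ord_enum. Qed.

Section Construct.
Variables (w : seq kind) (d : nat -> nat).
Hypotheses (Hs : size w = n) (Hd0 : d 0 = 0) (Hdn : d n = 0)
  (HLR : forall j, j < n -> LRspec (nth KA w j) (d j) (d j.+1))
  (Hirr : forall m, 0 < m < n -> 0 < d m).

Definition Rn : rel 'I_n := fun i j => Rw d i j.
Definition Pw := equivalence_partition Rn [set: 'I_n].

Lemma Rn_equiv : {in [set: 'I_n] & &, equivalence_rel Rn}.
Proof.
move=> x y z _ _ _; split; first exact: Rw_refl.
move=> hxy; apply/idP/idP => h.
  by apply: Rw_trans h; rewrite /Rn Rw_sym.
exact: Rw_trans hxy h.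
Qed.

Lemma Pw_part : partition Pw [set: 'I_n].
Proof. exact: equivalence_partitionP Rn_equiv. Qed.

Lemma Pw_mem x y : (y \in pblock Pw x) = Rw d x y.
Proof. by rewrite (pblock_equivalence_partition Rn_equiv) ?inE. Qed.

Lemma Pw_eq x y : (pblock Pw x == pblock Pw y) = Rw d x y.
Proof.
have /and3P[/eqP cP tP _] := Pw_part.
by rewrite eq_pblock // ?Pw_mem // cP inE.
Qed.

Lemma Pw_ncns : ncns_tilde Pw.
Proof.
have /and3P[/eqP cP tP nP] := Pw_part.
apply/and4P; split.
- exact: Pw_part.
- apply/forallP => a; apply/forallP => b; apply/forallP => c; apply/forallP => e.
  apply/implyP => /andP[/andP[/andP[h1 h2] ]]; rewrite !Pw_eq => h3 h4.
  exact: Rw_NC h1 h2 h3 h4.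
- apply/forall_inP => V VP.
  have : V != set0 by apply: contraNneq nP => <-.
  case/set0Pn => x xV.
  have eV : V = pblock Pw x by rewrite (def_pblock tP VP xV).
  have [j jx Rj] : exists2 j : 'I_n, j != x & Rw d x j.
    case: (boolP (nth KA w x == KC)) => wx.
      have [j jx Rj] : exists2 j, j < x & Rw d j x.
        by apply: (LS (n := n) (w := w)) => //; rewrite (eqP wx).
      have jn : j < n by apply: ltn_trans jx (ltn_ord x).
      exists (Ordinal jn); last by rewrite Rw_sym.
      by apply: contraTneq jx => <-; rewrite ltnn.
    have [j /andP[xj jn] Rj] : exists2 j, x < j < n & Rw d x j.
      by apply: (RS (n := n) (w := w)).
    exists (Ordinal jn) => //; apply: contraTneq xj => <-; by rewrite ltnn.
  apply/card_gt1P; exists x, j; split => //; first by rewrite eV Pw_mem.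
  by rewrite eq_sym.
- apply/forallP => i; apply/forallP => j; apply/implyP => /andP[/eqP i0 /eqP jn].
  rewrite Pw_eq i0 jn.
  case: (ltnP 1 n) => n2; last first.
    have -> : n.-1 = 0 by lia.
    exact: Rw_refl.
  have h0 : d 1 = 1.
    have := HLR (ltnW n2); rewrite Hd0; case: (nth KA w 0) => //=; lia.
  have h1 : d n.-1 = 1.
    have n1 : n.-1 < n by lia.
    have := HLR n1; rewrite (_ : n.-1.+1 = n); last by lia.
    rewrite Hdn; case: (nth KA w n.-1) => //=; lia.
  apply/RwP; split.
    by rewrite /lam Hd0 h0 (_ : n.-1.+1 = n) ?Hdn ?h1 //; lia.
  move=> m hm; rewrite /lam Hd0 h0 max0n; apply: Hirr; lia.
Qed.

Lemma Pw_word : wordP Pw = w.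
Proof.
apply: (@eq_from_nth _ KA); first by rewrite size_wordP Hs.
move=> i; rewrite size_wordP => iN.
rewrite -[i]/(nat_of_ord (Ordinal iN)); set x := Ordinal iN.
rewrite nth_wordP /kindP.
have xn : x < n by [].
case E: (nth KA w x).
- rewrite ifT //; apply/forall_inP => j; rewrite Pw_mem => Rj.
  rewrite leqNgt; apply/negP => jx.
  by have := NoLeft Hs Hd0 Hdn HLR xn E jx; rewrite Rw_sym Rj.
- have [j jx Rj] : exists2 j, j < x & Rw d j x.
    by apply: (LS (n := n) (w := w)) => //; rewrite E.
  have jn : j < n by apply: ltn_trans jx xn.
  rewrite ifF; last first.
    apply/negbTE/forall_inPn; exists (Ordinal jn); first by rewrite Pw_mem Rw_sym.
    by rewrite /= -ltnNge.
  rewrite ifT //; apply/forall_inP => k; rewrite Pw_mem => Rk.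
  rewrite leqNgt; apply/negP => xk.
  by have := NoRight Hs Hd0 Hdn HLR xn E xk; rewrite Rk.
- have [j jx Rj] : exists2 j, j < x & Rw d j x.
    by apply: (LS (n := n) (w := w)) => //; rewrite E.
  have jn : j < n by apply: ltn_trans jx xn.
  have [k /andP[xk kn] Rk] : exists2 k, x < k < n & Rw d x k.
    by apply: (RS (n := n) (w := w)) => //; rewrite E.
  rewrite ifF; last first.
    apply/negbTE/forall_inPn; exists (Ordinal jn); first by rewrite Pw_mem Rw_sym.
    by rewrite /= -ltnNge.
  rewrite ifF //.
  apply/negbTE/forall_inPn; exists (Ordinal kn); first by rewrite Pw_mem.
  by rewrite /= -ltnNge.
Qed.

End Construct.
End Part.

Section PartSide.
Variable n : nat.
Variable P : {set {set 'I_n}}.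
Hypothesis HP : ncns_tilde P.

Definition Sb (m : nat) : {set {set 'I_n}} :=
  [set W in P | [exists x in W, (x < m)%N] && [exists x in W, (m <= x)%N]].
Definition Tb (m : nat) : {set {set 'I_n}} :=
  [set W in P | [exists x in W, (x <= m)%N] && [exists x in W, (m <= x)%N]].

Lemma HPpart : partition P [set: 'I_n].
Proof. by case/and4P: HP. Qed.

Lemma tP : trivIset P. Proof. by case/and3P: HPpart. Qed.
Lemma cP : cover P = [set: 'I_n]. Proof. by case/and3P: HPpart => /eqP. Qed.

Lemma pb_in x : pblock P x \in P.
Proof. by rewrite pblock_mem // cP inE. Qed.
Lemma pb_self x : x \in pblock P x.
Proof. by rewrite mem_pblock cP inE. Qed.
Lemma pbW W x : W \in P -> x \in W -> pblock P x = W.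
Proof. by move=> WP xW; rewrite (def_pblock tP WP xW). Qed.

Lemma NCp (a b c e : 'I_n) : a < b < c -> c < e -> pblock P a = pblock P c ->
  pblock P b = pblock P e -> pblock P a = pblock P b.
Proof.
case/and4P: HP => _ /forallP H _ _ h1 h2 h3 h4.
move: (H a) => /forallP/(_ b)/forallP/(_ c)/forallP/(_ e)/implyP.
by rewrite h1 h2 h3 h4 !eqxx => /(_ isT)/eqP.
Qed.

Lemma ns x : exists2 y, y \in pblock P x & y != x.
Proof.
case/and4P: HP => _ _ /forall_inP H _.
move: (H _ (pb_in x)) => /card_gt1P[a [b [aV bV ab]]].
case: (eqVneq a x) => [ax|ax]; last by exists a.
by exists b => //; rewrite -ax eq_sym.
Qed.

Lemma notin_other W x : W \in P -> W != pblock P x -> x \notin W.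
Proof. by move=> WP; apply: contra => xW; rewrite (pbW WP xW). Qed.

Lemma S_other (j : 'I_n) W : W \in P -> W != pblock P j -> (W \in Sb j.+1) = (W \in Sb j).
Proof.
move=> WP Wj; have jW := notin_other WP Wj.
rewrite !inE WP /=; congr (_ && _).
  apply/existsP/existsP => -[x /andP[xW h]]; exists x; rewrite xW /=.
    rewrite ltn_neqAle -ltnS h andbT; apply/negP => /eqP/val_inj e.
    by move: jW; rewrite -e xW.
  exact: ltnW.
apply/existsP/existsP => -[x /andP[xW h]]; exists x; rewrite xW /=.
  exact: ltnW.
rewrite ltn_neqAle h andbT; apply/negP => /eqP/val_inj e.
by move: jW; rewrite e xW.
Qed.

Lemma S_blk (j : 'I_n) :
  (pblock P j \in Sb j) = [exists x in pblock P j, (x < j)%N] /\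
  (pblock P j \in Sb j.+1) = [exists x in pblock P j, (j < x)%N].
Proof.
have jV := pb_self j.
rewrite !inE pb_in /=; split.
  have -> : [exists x in pblock P j, (j <= x)%N] by apply/existsP; exists j; rewrite jV leqnn.
  by rewrite andbT.
have -> : [exists x in pblock P j, (x < j.+1)%N] by apply/existsP; exists j; rewrite jV leqnn.
by [].
Qed.

Lemma kindP_spec (j : 'I_n) :
  match kindP P j with
  | KA => Sb j.+1 = pblock P j |: Sb j /\ pblock P j \notin Sb j
  | KC => Sb j = pblock P j |: Sb j.+1 /\ pblock P j \notin Sb j.+1
  | KP => Sb j = Sb j.+1 /\ pblock P j \in Sb j
  end.
Proof.
have [e1 e2] := S_blk j.
set V := pblock P j in e1 e2 *.
have eqo : forall W, W != V -> (W \in Sb j.+1) = (W \in Sb j).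
  move=> W WV; case: (boolP (W \in P)) => WP; first exact: S_other.
  by rewrite !inE (negbTE WP).
have [y yV yj] := ns j.
rewrite /kindP -/V.
case: ifP => [/forall_inP mn|/negbT/forall_inPn[x xV xj]].
  have nl : pblock P j \notin Sb j.
    rewrite e1; apply/negP => /exists_inP[x xV]; by rewrite ltnNge mn.
  have inr : V \in Sb j.+1.
    rewrite e2; apply/exists_inP; exists y => //.
    rewrite ltn_neqAle mn // andbT; apply/negP => /eqP/val_inj e.
    by move: yj; rewrite e eqxx.
  split => //; apply/setP => W; rewrite in_setU1.
  by case: (eqVneq W V) => [->|WV]; rewrite ?inr ?eqxx //= eqo.
have inl : V \in Sb j by rewrite e1; apply/exists_inP; exists x; rewrite // ltnNge.
case: ifP => [/forall_inP mx|/negbT/forall_inPn[z zV zj]].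
  have nr : V \notin Sb j.+1.
    rewrite e2; apply/negP => /exists_inP[z zV]; by rewrite ltnNge mx.
  split => //; apply/setP => W; rewrite in_setU1.
  by case: (eqVneq W V) => [->|WV]; rewrite ?inl ?eqxx //= eqo.
have inr : V \in Sb j.+1 by rewrite e2; apply/exists_inP; exists z; rewrite // ltnNge.
split => //; apply/setP => W.
by case: (eqVneq W V) => [->|WV]; rewrite ?inl ?inr // eqo.
Qed.

Lemma S_big m : n <= m -> Sb m = set0.
Proof.
move=> nm; apply/setP => W; rewrite !inE; apply/negbTE.
rewrite !negb_and; apply/orP; right; apply/orP; right.
apply/negP => /exists_inP[x _ mx]; move: (ltn_ord x); rewrite ltnNge.
by rewrite (leq_trans nm mx).
Qed.

Lemma run_wordP m : run (drop m (wordP P)) = Some #|Sb m|.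
Proof.
suff H : forall k m, n - m <= k -> run (drop m (wordP P)) = Some #|Sb m| by apply: (H (n - m)).
elim=> [|k IH] {}m hk.
  have nm : n <= m by rewrite -subn_eq0 -leqn0.
  by rewrite drop_oversize ?size_wordP // S_big // cards0.
case: (leqP n m) => nm.
  by rewrite drop_oversize ?size_wordP // S_big // cards0.
rewrite (drop_nth KA); last by rewrite size_wordP.
rewrite /run /= -/(run _) IH; last by lia.
rewrite -[m]/(nat_of_ord (Ordinal nm)) nth_wordP.
have := kindP_spec (Ordinal nm).
case: (kindP P (Ordinal nm)) => /= -[e h].
- by rewrite e cardsU1 h.
- by rewrite e cardsU1 (negbTE h).
- by rewrite -e; case: #|Sb m| (card0_eq (A := Sb m)) h => // /(_ erefl) ->; rewrite inE.
Qed.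

Definition dw (w : seq kind) (m : nat) : nat := odflt 0 (run (drop m w)).

Lemma dw_S m : dw (wordP P) m = #|Sb m|.
Proof. by rewrite /dw run_wordP. Qed.

Lemma T_S (j : 'I_n) : Tb j = Sb j :|: Sb j.+1.
Proof.
apply/setP => W; rewrite in_setU.
case: (eqVneq W (pblock P j)) => [->|WV].
  have jV := pb_self j.
  have -> : pblock P j \in Tb j.
    by rewrite inE pb_in /=; apply/andP; split; apply/exists_inP; exists j.
  have := kindP_spec j; case: (kindP P j) => -[e h].
  - by rewrite e setU11 orbT.
  - by rewrite e setU11.
  - by rewrite h.
rewrite !inE; case: (boolP (W \in P)) => //= WP.
have jW := notin_other WP WV.
apply/idP/idP.
  move=> /andP[/exists_inP[x xW xj] /exists_inP[y yW jy]].
  apply/orP; left; apply/andP; split; apply/exists_inP.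
    exists x => //; rewrite ltn_neqAle xj andbT; apply/negP => /eqP/val_inj e.
    by move: jW; rewrite -e xW.
  by exists y.
case/orP => /andP[/exists_inP[x xW xj] /exists_inP[y yW jy]]; apply/andP; split;
  apply/exists_inP; (exists x; by [|apply: ltnW]) || (exists y; by [|apply: ltnW]).
Qed.

Lemma max_card_U (A B : {set {set 'I_n}}) : A \subset B \/ B \subset A ->
  maxn #|A| #|B| = #|A :|: B|.
Proof.
case=> h.
  by rewrite (setUidPr h); apply/maxn_idPr; apply: subset_leq_card.
by rewrite (setUidPl h); apply/maxn_idPl; apply: subset_leq_card.
Qed.

Lemma lam_T (j : 'I_n) : lam (dw (wordP P)) j = #|Tb j|.
Proof.
rewrite /lam !dw_S T_S; apply: max_card_U.
have := kindP_spec j; case: (kindP P j) => -[e _]; rewrite e.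
- by left; apply: subsetUr.
- by right; apply: subsetUr.
- by left.
Qed.

Lemma irr_wordP : 0 < n -> irr (wordP P).
Proof.
move=> n0.
have S0 : Sb 0 = set0.
  apply/setP => W; rewrite !inE; apply/negbTE.
  by rewrite !negb_and; apply/orP; right; apply/orP; left; apply/negP => /exists_inP[].
apply/and3P; split.
- by rewrite size_wordP.
- by rewrite -(drop0 (wordP P)) run_wordP S0 cards0.
apply/allP => j; rewrite size_wordP mem_iota => /andP[j1 jn].
rewrite run_wordP; apply/negP => /eqP [] /eqP; rewrite cards_eq0 => /eqP S0'.
pose i0 : 'I_n := Ordinal n0.
have n1 : n.-1 < n by lia.
pose i1 : 'I_n := Ordinal n1.
have e : pblock P i0 = pblock P i1.
  case/and4P: HP => _ _ _ /forallP/(_ i0)/forallP/(_ i1)/implyP.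
  by rewrite /= !eqxx => /(_ isT)/eqP.
have : pblock P i0 \in Sb j.
  rewrite inE pb_in /=; apply/andP; split; apply/exists_inP.
    by exists i0; rewrite ?pb_self //=; lia.
  by exists i1; rewrite ?e ?pb_self //=; lia.
by rewrite S0' inE.
Qed.

Lemma pb_Rw_lt (i j : 'I_n) : i < j ->
  (pblock P i == pblock P j) = Rw (dw (wordP P)) i j.
Proof.
move=> ij; apply/idP/idP.
- move/eqP => e.
  have iV := pb_self i; have jV : j \in pblock P i by rewrite e pb_self.
  have cA : forall m, i < m <= j -> Tb i \subset Sb m.
    move=> m /andP[im mj]; apply/subsetP => W.
    rewrite !inE => /andP[WP /andP[/exists_inP[x xW xi] /exists_inP[y yW iy]]].
    rewrite WP /=.
    case: (eqVneq W (pblock P i)) => [->|WV].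
      by apply/andP; split; apply/exists_inP; [exists i | exists j].
    have iW := notin_other WP WV.
    have jW : j \notin W by rewrite -(pbW (pb_in i) jV) in WV; exact: notin_other.
    have xi' : x < i by rewrite ltn_neqAle xi andbT; apply/negP => /eqP/val_inj ex; move: iW; rewrite -ex xW.
    have iy' : i < y by rewrite ltn_neqAle iy andbT; apply/negP => /eqP/val_inj ey; move: iW; rewrite ey yW.
    apply/andP; split; apply/exists_inP; first by exists x => //; apply: ltn_trans xi' im.
    exists y => //; rewrite leqNgt; apply/negP => ym.
    have yj : y < j by apply: leq_trans ym mj.
    have := NCp (a := x) (b := i) (c := y) (e := j); rewrite xi' iy' yj.
    rewrite (pbW WP xW) (pbW WP yW) e => /(_ isT isT erefl erefl) WV'.
    by move: WV; rewrite WV' e eqxx.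
  have cB : forall m, i < m <= j -> Tb j \subset Sb m.
    move=> m /andP[im mj]; apply/subsetP => W.
    rewrite !inE => /andP[WP /andP[/exists_inP[x xW xj] /exists_inP[y yW jy]]].
    rewrite WP /=.
    case: (eqVneq W (pblock P i)) => [->|WV].
      by apply/andP; split; apply/exists_inP; [exists i | exists j].
    have jW : j \notin W by rewrite -(pbW (pb_in i) jV) in WV; exact: notin_other.
    have xj' : x < j by rewrite ltn_neqAle xj andbT; apply/negP => /eqP/val_inj ex; move: jW; rewrite -ex xW.
    have jy' : j < y by rewrite ltn_neqAle jy andbT; apply/negP => /eqP/val_inj ey; move: jW; rewrite ey yW.
    apply/andP; split; apply/exists_inP; last by exists y => //; apply: leq_trans mj (ltnW jy').
    exists x => //; rewrite ltnNge; apply/negP => mx.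
    have ix : i < x by apply: leq_trans im mx.
    have := NCp (a := i) (b := x) (c := j) (e := y); rewrite ix xj' jy'.
    rewrite (pbW WP xW) (pbW WP yW) e => /(_ isT isT erefl erefl) WV'.
    by move: WV; rewrite e -WV' eqxx.
  apply/RwP; rewrite !lam_T; split.
    apply/eqP; rewrite eqn_leq; apply/andP; split.
      apply: (leq_trans (subset_leq_card (cA j _))); first by rewrite ij leqnn.
      by apply: subset_leq_card; rewrite T_S subsetUl.
    apply: (leq_trans (subset_leq_card (cB i.+1 _))); first by rewrite ltnSn ij.
    by apply: subset_leq_card; rewrite T_S subsetUr.
  move=> m; rewrite (minn_idPl (ltnW ij)) (maxn_idPr (ltnW ij)) => hm.
  by rewrite dw_S; apply: subset_leq_card; apply: cA.
- move=> /RwP[]; rewrite !lam_T => e h.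
  case: (eqVneq (pblock P i) (pblock P j)) => // ne; exfalso.
  have iV := pb_self i; have jV' := pb_self j.
  have VT : pblock P i \in Tb i.
    by rewrite inE pb_in /=; apply/andP; split; apply/exists_inP; exists i.
  have VT' : pblock P j \in Tb j.
    by rewrite inE pb_in /=; apply/andP; split; apply/exists_inP; exists j.
  have jV : j \notin pblock P i.
    by apply: notin_other; [exact: pb_in | exact: ne].
  have iV' : i \notin pblock P j.
    by apply: notin_other; [exact: pb_in | rewrite eq_sym].
  have contr : forall (m : nat) (U : {set {set 'I_n}}) V, i < m <= j -> V \in U ->
      Sb m \subset U :\ V -> #|U| = #|Tb i| -> False.
    move=> m U V hm VU sub eU.
    have hm' : #|Tb i| <= #|Sb m|.
      by rewrite -dw_S; apply: h; rewrite (minn_idPl (ltnW ij)) (maxn_idPr (ltnW ij)).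
    have := subset_leq_card sub; have := cardsD1 V U; rewrite VU /= => c1 c2.
    by move: (leq_trans hm' c2); rewrite -eU c1 add1n ltnn.
  case: (boolP [exists y in pblock P i, j <= y]) => [/exists_inP[y yV jy]|nA].
    case: (boolP [exists x in pblock P j, x <= i]) => [/exists_inP[x xV' xi]|nB].
      have jy' : j < y by rewrite ltn_neqAle jy andbT; apply/negP => /eqP/val_inj ey; move: jV; rewrite ey yV.
      have xi' : x < i by rewrite ltn_neqAle xi andbT; apply/negP => /eqP/val_inj ex; move: iV'; rewrite -ex xV'.
      have := NCp (a := x) (b := i) (c := j) (e := y); rewrite xi' ij jy'.
      rewrite (pbW (pb_in j) xV') (pbW (pb_in i) yV) => /(_ isT isT erefl erefl) E.
      by move: ne; rewrite E eqxx.
    case: (arg_minnP (fun z : 'I_n => val z) jV') => M MV Mmin.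
    have iM : i < M.
      rewrite ltnNge; apply/negP => Mi; move: nB => /exists_inP; apply; by exists M.
    have Mj : M <= j by apply: Mmin.
    apply: (contr M (Tb j) (pblock P j)) => //; first by rewrite iM Mj.
    apply/subsetP => W; rewrite !inE => /andP[WP /andP[/exists_inP[x xW xM] /exists_inP[y2 yW My]]].
    have WV' : W != pblock P j.
      apply/negP => /eqP WV; have := Mmin x; rewrite -WV => /(_ xW).
      by rewrite leqNgt xM.
    rewrite WV' WP /=; apply/andP; split; apply/exists_inP.
      by exists x => //; apply: leq_trans (ltnW xM) Mj.
    exists y2 => //; rewrite leqNgt; apply/negP => yj.
    have jW : j \notin W by apply: notin_other.
    have MW : M \notin W by rewrite -(pbW (pb_in j) MV) in WV'; apply: notin_other.
    have My' : M < y2 by rewrite ltn_neqAle My andbT; apply/negP => /eqP/val_inj ey; move: MW; rewrite ey yW.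
    have := NCp (a := x) (b := M) (c := y2) (e := j); rewrite xM My' yj.
    rewrite (pbW WP xW) (pbW WP yW) (pbW (pb_in j) MV) => /(_ isT isT erefl erefl) E.
    by move: WV'; rewrite -E eqxx.
  case: (arg_maxnP (fun z : 'I_n => val z) iV) => M MV Mmax.
  have iM : i <= M by apply: Mmax.
  have Mj : M < j.
    rewrite ltnNge; apply/negP => jM; move: nA => /exists_inP; apply; by exists M.
  apply: (contr M.+1 (Tb i) (pblock P i)) => //; first by rewrite ltnS iM Mj.
  apply/subsetP => W; rewrite !inE => /andP[WP /andP[/exists_inP[x xW xM] /exists_inP[y yW My]]].
  have WV : W != pblock P i.
    apply/negP => /eqP WV; have := Mmax y; rewrite -WV => /(_ yW).
    by move=> hy; move: (leq_trans My hy); rewrite ltnn.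
  rewrite WV WP /=; apply/andP; split; apply/exists_inP; last first.
    by exists y => //; apply: leq_trans iM (ltnW My).
  exists x => //; rewrite leqNgt; apply/negP => ix.
  have MW : M \notin W by rewrite -(pbW (pb_in i) MV) in WV; apply: notin_other.
  have xM' : x < M by rewrite ltn_neqAle -ltnS xM andbT; apply/negP => /eqP/val_inj ex; move: MW; rewrite -ex xW.
  have := NCp (a := i) (b := x) (c := M) (e := y); rewrite ix xM' My.
  rewrite (pbW WP xW) (pbW WP yW) (pbW (pb_in i) MV) => /(_ isT isT erefl erefl) E.
  by move: WV; rewrite E eqxx.
Qed.

Lemma pb_Rw (i j : 'I_n) : (pblock P i == pblock P j) = Rw (dw (wordP P)) i j.
Proof.
case: (ltngtP i j) => [ij|ji|eij].
- exact: pb_Rw_lt.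
- by rewrite eq_sym Rw_sym pb_Rw_lt.
- by rewrite (val_inj eij) eqxx Rw_refl.
Qed.

Lemma pb_mem_Rw (i j : 'I_n) : (j \in pblock P i) = Rw (dw (wordP P)) i j.
Proof. by rewrite -eq_pblock ?pb_Rw // ?tP // cP inE. Qed.

End PartSide.

Lemma ncns_inj n (P Q : {set {set 'I_n}}) : ncns_tilde P -> ncns_tilde Q ->
  wordP P = wordP Q -> P = Q.
Proof.
move=> hP hQ e.
have epb : forall x, pblock P x = pblock Q x.
  by move=> x; apply/setP => y; rewrite (pb_mem_Rw hP) (pb_mem_Rw hQ) e.
have sub : forall (P1 P2 : {set {set 'I_n}}), ncns_tilde P1 -> ncns_tilde P2 ->
    (forall x, pblock P1 x = pblock P2 x) -> P1 \subset P2.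
  move=> P1 P2 h1 h2 ep; apply/subsetP => V VP.
  have : V != set0 by apply: contraTneq VP => ->; case/and4P: h1 => /and3P[].
  case/set0Pn => x xV.
  by rewrite -(pbW h1 VP xV) ep pb_in.
by apply/eqP; rewrite eqEsubset !sub.
Qed.

End Part3.
Import Part3.

Module Part4.
Set Implicit Arguments. Unset Strict Implicit. Unset Printing Implicit Defensive.

Lemma foldr_step_None x : foldr step None x = None.
Proof. by elim: x => //= k x ->. Qed.

Lemma run_drop_some w j : run w = Some 0 -> exists a, run (drop j w) = Some a.
Proof.
move=> rw; case E: (run (drop j w)) => [a|]; first by exists a.
move: rw; rewrite -(cat_take_drop j w) run_cat E foldr_step_None.
by [].
Qed.

Section Valid.
Variable w : seq kind.
Hypothesis rw : run w = Some 0.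

Lemma dw0 : dw w 0 = 0. Proof. by rewrite /dw drop0 rw. Qed.
Lemma dwn : dw w (size w) = 0. Proof. by rewrite /dw drop_size. Qed.

Lemma LR_valid j : j < size w -> LRspec (nth KA w j) (dw w j) (dw w j.+1).
Proof.
move=> jn; rewrite /dw.
have [a Ea] := run_drop_some j rw.
have [b Eb] := run_drop_some j.+1 rw.
rewrite Ea Eb /=.
move: Ea; rewrite (drop_nth KA jn) /run /= -/(run _) Eb.
case: (nth KA w j) => /=.
- by move: Eb; case: b => // b _ [<-].
- by move=> [<-].
- by move: Eb; case: b => // b _ [<-].
Qed.

Lemma dw_pos m : irr w -> 0 < m < size w -> 0 < dw w m.
Proof.
move=> /and3P[_ _ /allP h] /andP[m0 mn].
have hm : m \in iota 1 (size w).-1 by rewrite mem_iota; lia.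
have [a Ea] := run_drop_some m rw.
move: (h m hm); rewrite /dw Ea /=.
by move: Ea; case: a.
Qed.
End Valid.

Section Final.
Variables (C : numClosedFieldType) (B : algType C).
Variables (star : B -> B) (gamma : B -> B) (phi : B -> C) (L : B -> B -> B).

Lemma WM_ops_eq n (P : {set {set 'I_n}}) (u : 'I_n -> B) :
  WM_ops gamma phi L P u = ops gamma phi L (wordP P) (map u (enum 'I_n)).
Proof.
rewrite /WM_ops /wordP; elim: (enum 'I_n) => //= i s ->.
by rewrite /kindP; case: [forall j in pblock P i, (i <= j)%N]; case: [forall j in pblock P i, (j <= i)%N].
Qed.

Lemma sum_ncns n (u : 'I_n -> B) : 0 < n ->
  (\sum_(P : {set {set 'I_n}} | ncns_tilde P) vacuum_state star gamma phi (WM_ops gamma phi L P u)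
  = Irr star gamma phi L (map u (enum 'I_n)))%R.
Proof.
move=> n0; set us := map u (enum 'I_n).
have sus : size us = n by rewrite size_map size_enum_ord.
rewrite /Irr sus -[RHS]big_filter.
have pe : perm_eq [seq w <- words n | irr w]
    [seq wordP P | P <- enum [pred P : {set {set 'I_n}} | ncns_tilde P]].
  apply: uniq_perm.
  - by rewrite filter_uniq // uniq_words.
  - rewrite map_inj_in_uniq ?enum_uniq // => P Q; rewrite !mem_enum; exact: ncns_inj.
  - move=> w; rewrite mem_filter mem_words; apply/andP/mapP.
    + move=> [iw /eqP sw].
      have rw : run w = Some 0 by case/and3P: iw => _ /eqP.
      have d0 := dw0 rw.
      have dn : dw w n = 0 by rewrite -sw dwn.
      have HLR : forall j, j < n -> LRspec (nth KA w j) (dw w j) (dw w j.+1).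
        by move=> j; rewrite -sw; apply: LR_valid.
      exists (Pw n (dw w)).
        rewrite mem_enum inE; apply: (Pw_ncns sw d0 dn HLR).
        by move=> m; rewrite -sw; apply: dw_pos.
      by rewrite (Pw_word sw d0 dn HLR).
    + move=> [P]; rewrite mem_enum inE => hP ->.
      by rewrite irr_wordP // size_wordP.
rewrite [RHS](perm_big _ pe) big_map big_enum /=.
by apply: eq_bigr => P _; rewrite WM_ops_eq.
Qed.

End Final.

Section Main.
Variables (C : numClosedFieldType) (B : algType C).
Variables (star : B -> B) (gamma : B -> B) (phi : B -> C) (L : B -> B -> B).
Variable (Bc : seq (op B) -> C).
Hypothesis HBc : boolean_cumulants star gamma phi Bc.
Local Open Scope ring_scope.

Lemma main_ind m : forall us : seq B, (0 < size us <= m)%N ->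
  Bc (map (Xop gamma phi L) us) = Irr star gamma phi L us.
Proof.
elim: m => [|m IH] us /andP[n0 nm]; first by move: n0; rewrite leqNgt (leq_ltn_trans nm).
have e1 := BR HBc (t := map (Xop gamma phi L) us); rewrite size_map in e1.
have e2 := Mom_rec star gamma phi L n0.
move: (e1 n0); rewrite -/(Mom star gamma phi L us) e2.
case E: (size us) n0 e2 => [|n'] // _ _.
rewrite !big_ord_recr /=.
have -> : \sum_(i < n') Bc (take (widen_ord (leqnSn n') i).+1 (map (Xop gamma phi L) us)) *
      vacuum_state star gamma phi (drop (widen_ord (leqnSn n') i).+1 (map (Xop gamma phi L) us)) =
    \sum_(i < n') Irr star gamma phi L (take (widen_ord (leqnSn n') i).+1 us) *
      Mom star gamma phi L (drop (widen_ord (leqnSn n') i).+1 us).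
  apply: eq_bigr => k _; rewrite /= -map_take -map_drop IH //.
  rewrite size_take E ltnS; case: ifP => [h|]; last by rewrite ltn_ord.
  by rewrite /=; move: nm; rewrite E ltnS; apply: leq_trans (ltn_ord k).
have t1 : take n'.+1 us = us by rewrite -E take_size.
have t2 : drop n'.+1 us = [::] by rewrite -E drop_size.
have t3 : take n'.+1 (map (Xop gamma phi L) us) = map (Xop gamma phi L) us.
  by rewrite -E -(size_map (Xop gamma phi L) us) take_size.
have t4 : drop n'.+1 (map (Xop gamma phi L) us) = [::].
  by rewrite -E -(size_map (Xop gamma phi L) us) drop_size.
rewrite t1 t2 t3 t4 /Mom /= vacuum_nil !mulr1.
by move/addrI.
Qed.

End Main.


End Part4.
Import Part4.

Local Open Scope ring_scope.
Theorem lemma3p4 (C : numClosedFieldType) (B : algType C) (star : B -> B)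
  (phi : B -> C) (gamma : B -> B) (L : B -> B -> B)
  (Hstar : star_algebra star)
  (Hphi : star_linear_functional star phi)
  (Hgamma : star_linear_map star gamma)
  (HL : star_linear_tensor star L)
  (Hpos : positive_functional star phi)
  (Hfaith : faithful_functional star phi)
  (Hcp : completely_positive star (gamma_plus_phi gamma phi))
  (HLphi : forall b u v, phi (star v * L b u) = phi (star (L (star b) v) * u))
  (HLgamma : forall b u v,
     gamma (star v * L b u) = gamma (star (L (star b) v) * u))
  (Bc : seq (op B) -> C)
  (HBc : boolean_cumulants star gamma phi Bc) :
  (forall n (u : 'I_n -> B), (2 <= n)%N ->
     Bc [seq Xop gamma phi L (u i) | i <- enum 'I_n] =
     \sum_(P : {set {set 'I_n}} | ncns_tilde P)
        vacuum_state star gamma phi (WM_ops gamma phi L P u))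
  /\ (forall u1 : B, Bc [:: Xop gamma phi L u1] = 0).
Proof.
split.
- move=> n u n2.
  rewrite sum_ncns; last by apply: leq_trans n2.
  rewrite (map_comp (Xop gamma phi L) u) (@main_ind _ _ _ _ _ _ _ HBc (size (map u (enum 'I_n)))) //.
  by rewrite leqnn andbT size_map size_enum_ord (leq_trans _ n2).
- move=> u1.
  rewrite (_ : [:: Xop gamma phi L u1] = map (Xop gamma phi L) [:: u1]) //.
  rewrite (@main_ind _ _ _ _ _ _ _ HBc 1) // /Irr big_seq_cond big1 // => w /andP[wi iw].
  move: wi; rewrite mem_words; case: w iw => [|k [|]] //.
  by case: k.
Qed.
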